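(* There exists an absolute constant $C$ such that the following holds. Let $W$ be a non-negative integer-valued random variable with $EW=\lambda\in(0,\infty)$, let $Y\sim\mathrm{Poi}(\lambda)$, let $\eta_k$ and $g_1$ be as defined in the context. Then for every integer $k\ge0$: $$E\,g_1((W+1)\wedge k)\le C(\eta_k+1)\Big(\frac1\lambda+\frac{(k+1-\lambda)_+^2}{\lambda^2}\Big),$$ $$E\big[(W\wedge k)\,g_1(W\wedge k)\big]\le C(\eta_k+1)\Big(1+\frac{(k-\lambda)_+^2}{\lambda}\Big),$$ $$E\big[(W\wedge k)^2\,g_1(W\wedge k)\big]\le C(\eta_k+1)\Big(\lambda+(k-\lambda)_+^2+\frac{(k-\lambda)_+^3}{\lambda}\Big).$$
   Context: $a\wedge b=\min(a,b)$, $x_+=\max(x,0)$. For integers $k\ge 0$, $\eta_k=\sup\{P(W\ge r)/P(Y\ge r): r \text{ integer},\ \lambda\le r\le k\}$ (supremum of the empty set equal to $0$). The function $g_1:\{0,1,2,\dots\}\to\mathbb R$ is defined by $g_1(0)=0$ and, for integers $w\ge1$, $g_1(w)=\frac{e^\lambda w!}{\lambda^{w+1}}P(Y\le w)-\frac{e^\lambda (w-1)!}{\lambda^{w}}P(Y\le w-1)$. *)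

(* Defs.v *)
From Stdlib Require Import Reals Lra Factorial.
Open Scope R_scope.

Definition pois_cdf (lam : R) (w : nat) : R :=
  sum_f_R0 (fun i => exp (- lam) * lam ^ i / INR (fact i)) w.

Definition pois_tail (lam : R) (r : nat) : R :=
  match r with O => 1 | S r' => 1 - pois_cdf lam r' end.

(* The law of a nonnegative integer-valued W is given by its pmf p (p n = P(W = n)).
   P(W >= r) = 1 - sum_{i<r} p i. *)
Definition pmf_tail (p : nat -> R) (r : nat) : R :=
  match r with O => 1 | S r' => 1 - sum_f_R0 p r' end.

(* eta_k = sup { P(W>=r)/P(Y>=r) : r integer, lam <= r <= k }, sup of empty set = 0.
   All ratios are >= 0, so the max with the initial value 0 equals the sup. *)
Fixpoint eta (p : nat -> R) (lam : R) (k : nat) : R :=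
  let cur r := if Rle_dec lam (INR r) then pmf_tail p r / pois_tail lam r else 0 in
  match k with
  | O => Rmax 0 (cur O)
  | S k' => Rmax (eta p lam k') (cur k)
  end.

Definition g1 (lam : R) (w : nat) : R :=
  match w with
  | O => 0
  | S w' => exp lam * INR (fact w) / lam ^ (w + 1) * pois_cdf lam w
            - exp lam * INR (fact w') / lam ^ w * pois_cdf lam w'
  end.

Definition pospart (x : R) : R := Rmax x 0.

(* Main.v *)
Require Import Defs.
From Stdlib Require Import Reals Lra Psatz Factorial.
Open Scope R_scope.


Fixpoint sumr (f : nat -> R) (n : nat) : R :=
  match n with O => 0 | S n => sumr f n + f n end.

Lemma sum_f_R0_sumr f n : sum_f_R0 f n = sumr f (S n).
Proof. induction n; simpl in *; [lra| rewrite IHn; reflexivity]. Qed.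

Lemma sumr_ext f g n : (forall i, (i < n)%nat -> f i = g i) -> sumr f n = sumr g n.
Proof. induction n; simpl; intros H; [reflexivity|]. rewrite IHn by (intros; apply H; lia). rewrite H by lia. reflexivity. Qed.

Lemma sumr_le f g n : (forall i, (i < n)%nat -> f i <= g i) -> sumr f n <= sumr g n.
Proof. induction n; simpl; intros H; [lra|]. assert (f n <= g n) by (apply H; lia). assert (sumr f n <= sumr g n) by (apply IHn; intros; apply H; lia). lra. Qed.

Lemma sumr_nonneg f n : (forall i, 0 <= f i) -> 0 <= sumr f n.
Proof. intros H; induction n; simpl; [lra|]. specialize (H n); lra. Qed.

Lemma sumr_mono f n m : (forall i, 0 <= f i) -> (n <= m)%nat -> sumr f n <= sumr f m.
Proof. intros H Hnm; induction Hnm; simpl; [lra|]. specialize (H m); lra. Qed.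

Lemma sumr_plus f g n : sumr (fun i => f i + g i) n = sumr f n + sumr g n.
Proof. induction n; simpl; lra. Qed.

Lemma sumr_scal c f n : sumr (fun i => c * f i) n = c * sumr f n.
Proof. induction n; simpl; [lra|]. rewrite IHn; ring. Qed.

Lemma cv_const B : Un_cv (fun _ => B) B.
Proof. intros e He; exists O; intros; unfold Rdist; rewrite Rminus_diag, Rabs_R0; lra. Qed.

Lemma lim_le u l B : Un_cv u l -> (forall n, u n <= B) -> l <= B.
Proof. intros Hu Hb. exact (Rle_cv_lim Hb Hu (cv_const B)). Qed.

Definition pi (lam : R) (i : nat) : R := exp (- lam) * lam ^ i / INR (fact i).

Lemma INR_fact_pos i : 0 < INR (fact i).
Proof. apply lt_0_INR, lt_O_fact. Qed.

Lemma pi_pos lam i : 0 < lam -> 0 < pi lam i.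
Proof. intros. unfold pi. pose proof (INR_fact_pos i). pose proof (exp_pos (-lam)).
  pose proof (pow_lt lam i H). apply Rdiv_lt_0_compat; [apply Rmult_lt_0_compat|]; lra. Qed.

Lemma pi_S lam i : pi lam (S i) = pi lam i * lam / INR (S i).
Proof. unfold pi. rewrite fact_simpl, mult_INR. simpl pow.
  pose proof (INR_fact_pos i). assert (0 < INR (S i)) by (apply lt_0_INR; lia).
  field; lra. Qed.

Lemma cdf_sumr lam w : pois_cdf lam w = sumr (pi lam) (S w).
Proof. unfold pois_cdf. rewrite sum_f_R0_sumr. reflexivity. Qed.

Lemma tail_sumr lam r : pois_tail lam r = 1 - sumr (pi lam) r.
Proof. destruct r; simpl; [lra|]. rewrite cdf_sumr. reflexivity. Qed.

Lemma ptail_sumr p r : pmf_tail p r = 1 - sumr p r.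
Proof. destruct r; simpl; [lra|]. rewrite sum_f_R0_sumr. reflexivity. Qed.

Lemma pi_sum lam : Un_cv (fun n => sumr (pi lam) (S n)) 1.
Proof.
  pose proof (proj2_sig (exist_exp lam)) as H. unfold exp_in in H.
  fold (exp lam) in H.
  assert (Hc := CV_mult _ _ _ _ (cv_const (exp (- lam))) H).
  replace 1 with (exp (- lam) * exp lam) by (rewrite <- exp_plus; replace (-lam+lam) with 0 by ring; apply exp_0).
  intros e He; destruct (Hc e He) as [N HN]; exists N; intros n Hn.
  specialize (HN n Hn). rewrite <- sum_f_R0_sumr.
  replace (sum_f_R0 (pi lam) n) with (exp (- lam) * sum_f_R0 (fun i => / INR (fact i) * lam ^ i) n); [exact HN|].
  rewrite scal_sum. apply sum_eq. intros i _. unfold pi. unfold Rdiv. ring.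
Qed.


Section Pois.
Variable lam : R.
Hypothesis Hlam : 0 < lam.

Lemma sumr_pi_le1 n : sumr (pi lam) n <= 1.
Proof.
  destruct n. simpl; lra.
  apply (growing_ineq (fun n => sumr (pi lam) (S n))); [|apply pi_sum].
  intros k; simpl. pose proof (pi_pos lam (S k) Hlam). lra.
Qed.

Lemma sumr_pi_lt1 n : sumr (pi lam) n < 1.
Proof. pose proof (sumr_pi_le1 (S n)); simpl in H. pose proof (pi_pos lam n Hlam); lra. Qed.

Lemma sumr_pi_nonneg n : 0 <= sumr (pi lam) n.
Proof. apply sumr_nonneg; intros; left; apply pi_pos; auto. Qed.

Lemma q_pos r : 0 < pois_tail lam r.
Proof. rewrite tail_sumr. pose proof (sumr_pi_lt1 r); lra. Qed.

Lemma q_le1 r : pois_tail lam r <= 1.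
Proof. rewrite tail_sumr. pose proof (sumr_pi_nonneg r); lra. Qed.

Lemma q_diff r : pois_tail lam r - pois_tail lam (S r) = pi lam r.
Proof. rewrite !tail_sumr; simpl; ring. Qed.

Lemma tail_bound m : lam < INR m + 1 ->
  pois_tail lam m <= pi lam m * (INR m + 1) / (INR m + 1 - lam).
Proof.
  intros HA. set (A := INR m + 1).
  assert (Hj : forall j, (A - lam) * (sumr (pi lam) (m + S j) - sumr (pi lam) m)
                         + lam * pi lam (m + j) <= A * pi lam m).
  { induction j.
    - rewrite Nat.add_0_r, Nat.add_1_r. simpl. lra.
    - replace (m + S (S j))%nat with (S (m + S j)) by lia. simpl sumr.
      assert (Hpi : pi lam (m + S j) = pi lam (m+j) * lam / INR (S (m+j)))
        by (replace (m+S j)%nat with (S(m+j)) by lia; apply pi_S).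
      assert (HB : A * (pi lam (m + j) * lam / INR (S (m + j))) <= lam * pi lam (m + j)).
      { pose proof (pi_pos lam (m+j) Hlam).
        assert (A <= INR (S (m+j))) by (unfold A; rewrite S_INR, plus_INR; pose proof (pos_INR j); lra).
        assert (0 < INR (S (m+j))) by (apply lt_0_INR; lia).
        apply (Rmult_le_reg_r (INR (S (m + j)))); auto.
        replace (A * (pi lam (m + j) * lam / INR (S (m + j))) * INR (S (m + j))) with (A * pi lam (m+j) * lam) by (field; lra).
        assert (0 <= (INR (S (m + j)) - A) * (pi lam (m+j) * lam)) by (apply Rmult_le_pos; nra). nra. }
      rewrite Hpi. lra. }
  assert (Hall : forall n, sumr (pi lam) (S n) <= sumr (pi lam) m + A * pi lam m / (A - lam)).
  { intros n. assert (0 <= A * pi lam m / (A - lam)).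
    { pose proof (pi_pos lam m Hlam). apply Rmult_le_pos; [|left; apply Rinv_0_lt_compat; unfold A; lra].
      pose proof (pos_INR m). apply Rmult_le_pos; unfold A; lra. }
    destruct (Compare_dec.le_lt_dec (S n) m).
    - pose proof (sumr_mono (pi lam) (S n) m (fun i => Rlt_le _ _ (pi_pos lam i Hlam)) l). lra.
    - replace (S n) with (m + S (n - m))%nat by lia. specialize (Hj (n - m)%nat).
      pose proof (pi_pos lam (m + (n - m)) Hlam).
      assert ((sumr (pi lam) (m + S (n - m)) - sumr (pi lam) m) <= A * pi lam m / (A - lam)).
      { assert (0 < A - lam) by (unfold A; lra).
        apply (Rmult_le_reg_l (A - lam)); [lra|].
        replace ((A - lam) * (A * pi lam m / (A - lam))) with (A * pi lam m) by (field; lra).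
        assert (0 <= lam * pi lam (m + (n - m))) by (apply Rmult_le_pos; lra). lra. }
      lra. }
  pose proof (lim_le _ _ _ (pi_sum lam) Hall). rewrite tail_sumr. lra.
Qed.

End Pois.


Definition ff (lam : R) (w : nat) : R := sumr (pi lam) (S w) / (lam * pi lam w).

Section G.
Variable lam : R.
Hypothesis Hlam : 0 < lam.

Lemma coef w : exp lam * INR (fact w) / lam ^ (w + 1) = / (lam * pi lam w).
Proof. unfold pi. rewrite exp_Ropp. rewrite Nat.add_1_r. simpl pow.
  pose proof (INR_fact_pos w). pose proof (exp_pos lam). pose proof (pow_lt lam w Hlam).
  field; repeat split; lra. Qed.

Lemma g1_S w : g1 lam (S w) = ff lam (S w) - ff lam w.
Proof. unfold g1. rewrite (coef (S w)). replace (lam ^ S w) with (lam^(w+1)) by (f_equal; lia). rewrite (coef w).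
  unfold ff. rewrite !cdf_sumr.
  pose proof (pi_pos lam (S w) Hlam). pose proof (pi_pos lam w Hlam). field; lra. Qed.

Lemma ff_rec w : lam * ff lam (S w) = 1 + INR (S w) * ff lam w.
Proof. unfold ff. change (sumr (pi lam) (S (S w))) with (sumr (pi lam) (S w) + pi lam (S w)). rewrite pi_S.
  pose proof (pi_pos lam w Hlam). assert (0 < INR (S w)) by (apply lt_0_INR; lia).
  field; repeat split; lra. Qed.

Lemma g1_form w : lam * g1 lam (S w) = 1 + (INR (S w) - lam) * ff lam w.
Proof. rewrite g1_S. pose proof (ff_rec w). lra. Qed.

Lemma ff0 : ff lam 0 = 1 / lam.
Proof. unfold ff. simpl sumr. pose proof (pi_pos lam 0 Hlam). field; lra. Qed.

Lemma g1_rec w : lam * g1 lam (S w) = ff lam w + INR w * g1 lam w.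
Proof. rewrite g1_form. destruct w.
  - rewrite ff0. change (g1 lam 0) with 0. simpl INR. field. lra.
  - rewrite g1_S. pose proof (ff_rec w). rewrite !S_INR in *. nra. Qed.

Lemma ff_nonneg w : 0 <= ff lam w.
Proof. unfold ff. pose proof (pi_pos lam w Hlam). apply Rmult_le_pos.
  apply sumr_pi_nonneg; auto. left; apply Rinv_0_lt_compat; nra. Qed.

Lemma g1_nonneg w : 0 <= g1 lam w.
Proof. induction w. simpl; lra. pose proof (g1_rec w). pose proof (ff_nonneg w).
  pose proof (pos_INR w). assert (0 <= lam * g1 lam (S w)) by nra. nra. Qed.

Lemma g1_mono w : g1 lam w <= g1 lam (S w).
Proof. induction w. { change (g1 lam 0) with 0. apply g1_nonneg. }
  pose proof (g1_rec (S w)). pose proof (g1_rec w). pose proof (g1_S w).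
  pose proof (g1_nonneg (S w)). pose proof (pos_INR w). rewrite S_INR in H.
  assert (lam * (g1 lam (S (S w)) - g1 lam (S w)) = 2 * g1 lam (S w) + INR w * (g1 lam (S w) - g1 lam w)) by lra.
  assert (0 <= INR w * (g1 lam (S w) - g1 lam w)) by (apply Rmult_le_pos; lra).
  assert (0 <= lam * (g1 lam (S (S w)) - g1 lam (S w))) by lra.
  destruct (Rle_lt_dec (g1 lam (S w)) (g1 lam (S (S w)))); auto.
  assert (lam * (g1 lam (S (S w)) - g1 lam (S w)) < 0) by (apply Rmult_pos_neg; lra). lra. Qed.

Lemma ff_small w : INR w <= lam -> ff lam w <= (INR w + 1) / lam.
Proof. induction w; intros Hw.
  - rewrite ff0. simpl INR. lra.
  - rewrite S_INR in *. assert (IH := IHw ltac:(lra)). pose proof (ff_rec w). rewrite S_INR in H.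
    pose proof (pos_INR w).
    assert (lam * ff lam (S w) <= INR w + 1 + 1).
    { rewrite H. assert ((INR w + 1) * ff lam w <= (INR w + 1) * ((INR w + 1)/lam)) by (apply Rmult_le_compat_l; lra).
      assert ((INR w + 1) * ((INR w + 1)/lam) <= INR w + 1).
      { replace ((INR w + 1) * ((INR w + 1)/lam)) with ((INR w + 1) * (INR w + 1) * /lam) by (field; lra).
        apply (Rmult_le_reg_r lam); auto. rewrite Rmult_assoc, Rinv_l by lra. nra. }
      lra. }
    apply (Rmult_le_reg_l lam); auto. replace (lam * ((INR w + 1 + 1) / lam)) with (INR w + 1 + 1) by (field; lra). lra. Qed.

Lemma g1_small w : INR w <= lam -> g1 lam w <= 1 / lam.
Proof. destruct w; intros Hw. simpl; unfold Rdiv; rewrite Rmult_1_l; left; apply Rinv_0_lt_compat; auto.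
  pose proof (g1_form w). pose proof (ff_nonneg w).
  assert (lam * g1 lam (S w) <= 1) by nra.
  apply (Rmult_le_reg_l lam); auto. replace (lam * (1/lam)) with 1 by (field; lra). lra. Qed.

Lemma g1_pi w : lam * g1 lam (S w) * pi lam (S w) =
   pi lam (S w) + (INR (S w) - lam) * sumr (pi lam) (S w) / INR (S w).
Proof. rewrite g1_form. unfold ff. rewrite pi_S. pose proof (pi_pos lam w Hlam).
  assert (0 < INR (S w)) by (apply lt_0_INR; lia). field; repeat split; lra. Qed.

End G.


Lemma sumr_exchange (a : nat -> nat -> R) N K :
  sumr (fun n => sumr (fun i => a n i) K) N = sumr (fun i => sumr (fun n => a n i) N) K.
Proof. induction N; simpl. { induction K; simpl; lra. }
  rewrite IHN. rewrite <- sumr_plus. reflexivity. Qed.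

Lemma abel_rev (G c : nat -> R) K :
  sumr (fun i => (G (S i) - G i) * c (S i)) K =
  sumr (fun i => G (S i) * (c (S i) - c (S (S i)))) K + G K * c (S K) - G 0%nat * c 1%nat.
Proof. induction K; simpl; [ring|]. rewrite IHK. ring. Qed.

Lemma eta_nonneg p lam k : 0 <= eta p lam k.
Proof. induction k; simpl. apply Rmax_l. eapply Rle_trans; [apply IHk|apply Rmax_l]. Qed.

Lemma eta_ge p lam k r : (r <= k)%nat ->
  (if Rle_dec lam (INR r) then pmf_tail p r / pois_tail lam r else 0) <= eta p lam k.
Proof. induction 1.
  - destruct r; simpl. apply Rmax_r. apply Rmax_r.
  - simpl. eapply Rle_trans; [apply IHle|apply Rmax_l]. Qed.

Lemma eta_bound p lam k r : 0 < lam -> lam <= INR r -> (r <= k)%nat ->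
  pmf_tail p r <= eta p lam k * pois_tail lam r.
Proof. intros Hl Hr Hk. pose proof (eta_ge p lam k r Hk). destruct (Rle_dec lam (INR r)); [|lra].
  pose proof (q_pos lam Hl r).
  replace (pmf_tail p r) with (pmf_tail p r / pois_tail lam r * pois_tail lam r) by (field; lra).
  apply Rmult_le_compat_r; lra. Qed.

Section W.
Variable p : nat -> R.
Variable lam : R.
Hypothesis Hp : forall n, 0 <= p n.
Hypothesis Hp1 : infinite_sum p 1.
Hypothesis Hlam : 0 < lam.

Lemma psum_le1 n : sumr p n <= 1.
Proof. destruct n. simpl; lra.
  apply (growing_ineq (fun n => sumr p (S n))).
  intros k; simpl. specialize (Hp (S k)). simpl in Hp. lra.
  intros e He; destruct (Hp1 e He) as [N HN]; exists N; intros m Hm; rewrite <- sum_f_R0_sumr; auto. Qed.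

Definition ind (r n : nat) : R := if Nat.leb r n then 1 else 0.

Lemma Tsum r N : sumr (fun n => p n * ind r n) N + sumr p r <= sumr p (Nat.max N r).
Proof. induction N. { simpl. lra. }
  change (sumr (fun n => p n * ind r n) (S N)) with (sumr (fun n => p n * ind r n) N + p N * ind r N).
  unfold ind at 2. destruct (Nat.leb r N) eqn:E.
  - apply Nat.leb_le in E. replace (Nat.max (S N) r) with (S N) by lia.
    replace (Nat.max N r) with N in IHN by lia. simpl sumr. lra.
  - apply Nat.leb_gt in E. replace (Nat.max (S N) r) with r by lia.
    replace (Nat.max N r) with r in IHN by lia. lra. Qed.

Lemma Tbound r N : sumr (fun n => p n * ind r n) N <= pmf_tail p r.
Proof. rewrite ptail_sumr. pose proof (Tsum r N). pose proof (psum_le1 (Nat.max N r)). lra. Qed.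

Lemma G_decomp (G : nat -> R) K n : (forall m, (K <= m)%nat -> G m = G K) ->
  G n = G 0%nat + sumr (fun i => (G (S i) - G i) * ind (S i) n) K.
Proof. intros HK.
  assert (H : forall K', (K' <= K)%nat -> G 0%nat + sumr (fun i => (G (S i) - G i) * ind (S i) n) K' = G (Nat.min n K')).
  { induction K'; intros HK'. simpl. rewrite Nat.min_0_r. lra.
    change (sumr (fun i => (G (S i) - G i) * ind (S i) n) (S K')) with
      (sumr (fun i => (G (S i) - G i) * ind (S i) n) K' + (G (S K') - G K') * ind (S K') n).
    rewrite <- Rplus_assoc, IHK' by lia. unfold ind. destruct (Nat.leb (S K') n) eqn:E.
    - apply Nat.leb_le in E. replace (Nat.min n (S K')) with (S K') by lia. replace (Nat.min n K') with K' by lia. ring.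
    - apply Nat.leb_gt in E. replace (Nat.min n (S K')) with n by lia. replace (Nat.min n K') with n by lia. ring. }
  rewrite H by lia. destruct (Compare_dec.le_lt_dec n K). f_equal; lia.
  rewrite Nat.min_r by lia. apply HK; lia. Qed.

Theorem wbound (G : nat -> R) (K k : nat) (M0 Pb : R) :
  (K <= k)%nat ->
  (forall n, 0 <= G n) -> (forall n, G n <= G (S n)) ->
  (forall n, (K <= n)%nat -> G n = G K) ->
  (forall n, INR n < lam -> (n <= K)%nat -> G n <= M0) ->
  sumr (fun i => G (S i) * (if Rle_dec lam (INR (S i)) then pi lam (S i) else 0)) K
   + G K * (if Rle_dec lam (INR (S K)) then pois_tail lam (S K) else 0) <= Pb ->
  forall E, infinite_sum (fun n => p n * G n) E -> E <= M0 + eta p lam k * Pb.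
Proof.
  intros HKk Gnn Gmon GK HM0 HPb E HE.
  set (c := fun r => if Rle_dec lam (INR r) then pois_tail lam r else 0).
  set (a := fun r => if Rle_dec lam (INR r) then 0 else 1).
  assert (HDG : forall i, 0 <= G (S i) - G i) by (intros i; specialize (Gmon i); lra).
  assert (HS : forall N, sumr (fun n => p n * G n) N <=
     G 0%nat + sumr (fun i => (G (S i) - G i) * pmf_tail p (S i)) K).
  { intros N.
    rewrite (sumr_ext _ (fun n => G 0%nat * p n + sumr (fun i => p n * ((G (S i) - G i) * ind (S i) n)) K)).
    2:{ intros n _. rewrite (G_decomp G K n GK) at 1. rewrite Rmult_plus_distr_l, <- sumr_scal. ring. }
    rewrite sumr_plus, sumr_scal, sumr_exchange.
    assert (G 0%nat * sumr p N <= G 0%nat) by (pose proof (psum_le1 N); pose proof (Gnn 0%nat); nra).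
    assert (sumr (fun i => sumr (fun n => p n * ((G (S i) - G i) * ind (S i) n)) N) K <=
            sumr (fun i => (G (S i) - G i) * pmf_tail p (S i)) K).
    { apply sumr_le. intros i _.
      rewrite (sumr_ext _ (fun n => (G (S i) - G i) * (p n * ind (S i) n))) by (intros; ring).
      rewrite sumr_scal. apply Rmult_le_compat_l; auto. apply Tbound. }
    lra. }
  assert (Ht : forall i, (i < K)%nat -> pmf_tail p (S i) <= a (S i) + eta p lam k * c (S i)).
  { intros i Hi. unfold a, c. destruct (Rle_dec lam (INR (S i))).
    - rewrite Rplus_0_l. apply eta_bound; auto; lia.
    - rewrite Rmult_0_r, Rplus_0_r. rewrite ptail_sumr. pose proof (sumr_nonneg p (S i) Hp). lra. }
  assert (HA : forall K', (K' <= K)%nat ->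
     (INR K' < lam -> G 0%nat + sumr (fun i => (G (S i) - G i) * a (S i)) K' = G K') /\
     G 0%nat + sumr (fun i => (G (S i) - G i) * a (S i)) K' <= M0).
  { induction K'; intros HK'.
    - simpl. split; [lra|]. rewrite Rplus_0_r. apply HM0; simpl; lia || lra.
    - destruct (IHK' ltac:(lia)) as [I1 I2]. simpl sumr.
      change (a (S K')) with (if Rle_dec lam (INR (S K')) then 0 else 1).
      destruct (Rle_dec lam (INR (S K'))).
      + split. intros. exfalso; apply (Rlt_irrefl lam); eapply Rle_lt_trans; eauto. lra.
      + rewrite S_INR in n.
        assert (HH : G 0%nat + sumr (fun i => (G (S i) - G i) * a (S i)) K' + (G (S K') - G K') * 1 = G (S K')).
        { rewrite I1 by lra. ring. }
        split; [intros; lra|]. rewrite <- Rplus_assoc, HH. apply HM0; [rewrite S_INR; lra| lia]. }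
  assert (HB : sumr (fun i => (G (S i) - G i) * c (S i)) K <= Pb).
  { rewrite abel_rev.
    assert (sumr (fun i => G (S i) * (c (S i) - c (S (S i)))) K <=
            sumr (fun i => G (S i) * (if Rle_dec lam (INR (S i)) then pi lam (S i) else 0)) K).
    { apply sumr_le. intros i _. apply Rmult_le_compat_l; auto. unfold c.
      destruct (Rle_dec lam (INR (S i))); destruct (Rle_dec lam (INR (S (S i)))).
      - rewrite q_diff; auto. lra.
      - exfalso. rewrite (S_INR (S i)) in n. lra.
      - pose proof (q_pos lam Hlam (S (S i))). lra.
      - lra. }
    assert (0 <= G 0%nat * c 1%nat).
    { unfold c. destruct (Rle_dec lam (INR 1)). pose proof (q_pos lam Hlam 1). pose proof (Gnn 0%nat). nra. lra. }
    change (if Rle_dec lam (INR (S K)) then pois_tail lam (S K) else 0) with (c (S K)) in HPb. lra. }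
  assert (HS2 : forall N, sumr (fun n => p n * G n) N <= M0 + eta p lam k * Pb).
  { intros N. pose proof (HS N).
    assert (sumr (fun i => (G (S i) - G i) * pmf_tail p (S i)) K <=
            sumr (fun i => (G (S i) - G i) * a (S i)) K + eta p lam k * sumr (fun i => (G (S i) - G i) * c (S i)) K).
    { rewrite <- sumr_scal, <- sumr_plus. apply sumr_le. intros i Hi.
      specialize (Ht i Hi). specialize (HDG i).
      replace ((G (S i) - G i) * a (S i) + eta p lam k * ((G (S i) - G i) * c (S i)))
        with ((G (S i) - G i) * (a (S i) + eta p lam k * c (S i))) by ring.
      apply Rmult_le_compat_l; auto. }
    destruct (HA K (le_n K)) as [_ HA2].
    pose proof (eta_nonneg p lam k).
    assert (eta p lam k * sumr (fun i => (G (S i) - G i) * c (S i)) K <= eta p lam k * Pb)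
      by (apply Rmult_le_compat_l; auto).
    lra. }
  apply (lim_le (fun n => sum_f_R0 (fun n => p n * G n) n) E); auto.
  intros n. rewrite sum_f_R0_sumr. apply HS2.
Qed.

End W.


Lemma Rdiv_le_0_compat a b : 0 <= a -> 0 < b -> 0 <= a / b.
Proof. intros. unfold Rdiv. apply Rmult_le_pos; auto. left; apply Rinv_0_lt_compat; auto. Qed.

Section T.
Variable lam : R.
Hypothesis Hlam : 0 < lam.

Lemma ff_le w : ff lam w <= / (lam * pi lam w).
Proof. unfold ff. pose proof (pi_pos lam w Hlam). pose proof (sumr_pi_le1 lam Hlam (S w)).
  unfold Rdiv. rewrite <- (Rmult_1_l (/ (lam * pi lam w))) at 2. apply Rmult_le_compat_r; auto.
  left; apply Rinv_0_lt_compat; nra. Qed.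

Lemma tailA w : lam <= INR (S w) -> lam * g1 lam (S w) * pois_tail lam (S w) <= 3.
Proof. intros Hw. rewrite (g1_form lam Hlam).
  pose proof (q_le1 lam Hlam (S w)). pose proof (q_pos lam Hlam (S w)).
  set (a := INR (S w)) in *. assert (Ha : a = INR w + 1) by (unfold a; apply S_INR).
  pose proof (pos_INR w).
  assert (HT := tail_bound lam Hlam (S w) ltac:(fold a; lra)). fold a in HT.
  rewrite pi_S in HT. fold a in HT.
  pose proof (ff_le w). pose proof (ff_nonneg lam Hlam w). pose proof (pi_pos lam w Hlam).
  set (P := pi lam w) in *. set (q := pois_tail lam (S w)) in *. set (f := ff lam w) in *.
  assert (f * q <= 2 / (a + 1 - lam)).
  { eapply Rle_trans. apply Rmult_le_compat; [lra|lra|exact H2|exact HT].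
    replace (/ (lam * P) * (P * lam / a * (a + 1) / (a + 1 - lam))) with ((a+1)/a / (a + 1 - lam)) by (field; repeat split; lra).
    unfold Rdiv. apply Rmult_le_compat_r. left; apply Rinv_0_lt_compat; lra.
    apply (Rmult_le_reg_r a); [lra|]. rewrite Rmult_assoc, Rinv_l by lra. lra. }
  assert ((a - lam) * (f * q) <= 2).
  { eapply Rle_trans. apply Rmult_le_compat_l; [lra|exact H5].
    replace ((a - lam) * (2 / (a + 1 - lam))) with (2 * ((a - lam) / (a + 1 - lam))) by (field; lra).
    assert ((a - lam) / (a + 1 - lam) <= 1).
    { apply (Rmult_le_reg_r (a + 1 - lam)); [lra|]. unfold Rdiv. rewrite Rmult_assoc, Rinv_l by lra. lra. }
    lra. }
  replace ((1 + (a - lam) * f) * q) with (q + (a - lam) * (f * q)) by ring. lra. Qed.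

Lemma tailB w : lam < INR (S w) -> lam * g1 lam (S w) * pois_tail lam (S (S w)) <= 1 + 2 * lam / INR (S w).
Proof. intros Hw. rewrite (g1_form lam Hlam).
  pose proof (q_le1 lam Hlam (S (S w))). pose proof (q_pos lam Hlam (S (S w))).
  set (a := INR (S w)) in *. assert (Ha : a = INR w + 1) by (unfold a; apply S_INR).
  pose proof (pos_INR w).
  assert (HT := tail_bound lam Hlam (S (S w)) ltac:(rewrite S_INR; fold a; lra)).
  rewrite S_INR in HT. fold a in HT.
  rewrite pi_S, pi_S in HT. rewrite (S_INR (S w)) in HT. fold a in HT.
  pose proof (ff_le w). pose proof (ff_nonneg lam Hlam w). pose proof (pi_pos lam w Hlam).
  set (P := pi lam w) in *. set (q := pois_tail lam (S (S w))) in *. set (f := ff lam w) in *.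
  assert ((a - lam) * (f * q) <= 2 * lam / a).
  { eapply Rle_trans. apply Rmult_le_compat_l; [lra|]. apply Rmult_le_compat; [lra|lra|exact H2|exact HT].
    replace ((a - lam) * (/ (lam * P) * (P * lam / a * lam / (a + 1) * (a + 1 + 1) / (a + 1 + 1 - lam))))
      with (lam / a * ((a - lam) / (a + 1 + 1 - lam)) * ((a + 1 + 1) / (a + 1))) by (field; repeat split; lra).
    assert (0 <= (a - lam) / (a + 1 + 1 - lam) <= 1).
    { split. apply Rdiv_le_0_compat; lra.
      apply (Rmult_le_reg_r (a + 1 + 1 - lam)); [lra|]. unfold Rdiv. rewrite Rmult_assoc, Rinv_l by lra. lra. }
    assert ((a + 1 + 1) / (a + 1) <= 2).
    { apply (Rmult_le_reg_r (a + 1)); [lra|]. unfold Rdiv. rewrite Rmult_assoc, Rinv_l by lra. lra. }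
    assert (0 <= lam / a) by (apply Rdiv_le_0_compat; lra).
    replace (2 * lam / a) with (lam / a * 2) by (field; lra).
    rewrite Rmult_assoc. apply Rmult_le_compat_l; auto.
    assert (0 <= (a + 1 + 1) / (a + 1)) by (apply Rdiv_le_0_compat; lra).
    nra. }
  replace ((1 + (a - lam) * f) * q) with (q + (a - lam) * (f * q)) by ring. lra. Qed.

End T.


Lemma sumr_shift f k : sumr f (S k) = f 0%nat + sumr (fun i => f (S i)) k.
Proof. induction k. simpl; ring. change (sumr f (S (S k))) with (sumr f (S k) + f (S k)). rewrite IHk. simpl. ring. Qed.

Definition px (lam : R) (k : nat) : R := Rmax (INR k - lam) 0.

Lemma px_nonneg lam k : 0 <= px lam k.
Proof. apply Rmax_r. Qed.

Section S.
Variable lam : R.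
Hypothesis Hlam : 0 < lam.

Lemma M1 k : sumr (fun i => INR (S i) * pi lam (S i)) k <= lam.
Proof. rewrite (sumr_ext _ (fun i => lam * pi lam i)).
  rewrite sumr_scal. pose proof (sumr_pi_le1 lam Hlam k). nra.
  intros i _. rewrite pi_S. assert (0 < INR (S i)) by (apply lt_0_INR; lia). field; lra. Qed.

Lemma M1' k : sumr (fun i => INR i * pi lam i) k <= lam.
Proof. eapply Rle_trans; [apply (sumr_mono _ k (S k)); [intros; pose proof (pos_INR i); pose proof (pi_pos lam i Hlam); nra| lia]|].
  rewrite sumr_shift. simpl INR. rewrite Rmult_0_l, Rplus_0_l. apply M1. Qed.

Definition ilin (i : nat) : R := if Rle_dec lam (INR (S i)) then INR (S i) - lam else 0.

Lemma ilin_nonneg i : 0 <= ilin i.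
Proof. unfold ilin. destruct Rle_dec; lra. Qed.

Lemma Lsum k : (INR k < lam -> sumr ilin k = 0) /\ sumr ilin k <= 2 * px lam k ^ 2 + lam.
Proof. induction k. simpl. split; [auto|]. pose proof (px_nonneg lam 0). nra.
  destruct IHk as [I1 I2]. simpl sumr. change (ilin k) with (if Rle_dec lam (INR (S k)) then INR (S k) - lam else 0). rewrite S_INR. unfold px in *.
  rewrite S_INR. pose proof (pos_INR k).
  destruct (Rle_dec lam (INR k + 1)).
  - split; [intros; lra|].
    rewrite Rmax_left by lra.
    destruct (Rle_dec lam (INR k)).
    + rewrite Rmax_left in I2 by lra. nra.
    + rewrite I1 by lra. nra.
  - split; [intros; rewrite I1 by lra; lra|].
    rewrite Rmax_right by lra. rewrite Rmax_right in I2 by lra. lra. Qed.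

Lemma Lx k : lam <= INR k -> INR k - lam <= 2 * lam + 2 * (INR k - lam) ^ 2.
Proof. intros H. destruct k. simpl in H; lra.
  rewrite S_INR in *. pose proof (pos_INR k).
  destruct (Rle_dec (1/2) (INR k + 1 - lam)). nra. nra. Qed.

End S.


Lemma g1_mono_le lam a b : 0 < lam -> (a <= b)%nat -> g1 lam a <= g1 lam b.
Proof. intros Hl H; induction H. lra. eapply Rle_trans; [apply IHle| apply g1_mono; auto]. Qed.

Section St.
Variable lam : R.
Hypothesis Hlam : 0 < lam.

Lemma termG i : lam <= INR (S i) ->
  lam * g1 lam (S i) * pi lam (S i) <= pi lam (S i) + (INR (S i) - lam) / INR (S i).
Proof. intros H. rewrite (g1_pi lam Hlam). assert (0 < INR (S i)) by (apply lt_0_INR; lia).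
  pose proof (sumr_pi_le1 lam Hlam (S i)). pose proof (sumr_pi_nonneg lam Hlam (S i)).
  unfold Rdiv. apply Rplus_le_compat_l. apply Rmult_le_compat_r. left; apply Rinv_0_lt_compat; lra.
  rewrite <- (Rmult_1_r (INR (S i) - lam)) at 2. apply Rmult_le_compat_l; lra. Qed.

Lemma termG1 i : lam <= INR (S i) ->
  lam * (INR (S i) * g1 lam (S i)) * pi lam (S i) <= INR (S i) * pi lam (S i) + (INR (S i) - lam).
Proof. intros H. pose proof (termG i H). assert (0 < INR (S i)) by (apply lt_0_INR; lia).
  replace (lam * (INR (S i) * g1 lam (S i)) * pi lam (S i)) with (INR (S i) * (lam * g1 lam (S i) * pi lam (S i))) by ring.
  replace (INR (S i) * pi lam (S i) + (INR (S i) - lam)) with (INR (S i) * (pi lam (S i) + (INR (S i) - lam) / INR (S i))) by (field; lra).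
  apply Rmult_le_compat_l; lra. Qed.

End St.


Lemma Rle_div_l a b c : 0 < c -> a * c <= b -> a <= b / c.
Proof. intros Hc H. apply (Rmult_le_reg_r c); auto. unfold Rdiv. rewrite Rmult_assoc, Rinv_l by lra. lra. Qed.

Section St2.
Variable p : nat -> R.
Variable lam : R.
Hypothesis Hp : forall n, 0 <= p n.
Hypothesis Hp1 : infinite_sum p 1.
Hypothesis Hlam : 0 < lam.

Lemma stmt2 k E : infinite_sum (fun n => p n * (INR (Nat.min n k) * g1 lam (Nat.min n k))) E ->
  E <= 7 * (eta p lam k + 1) * (1 + px lam k ^ 2 / lam).
Proof.
  intros HE.
  set (x := px lam k). pose proof (px_nonneg lam k) as Hx. fold x in Hx.
  set (G := fun n => INR (Nat.min n k) * g1 lam (Nat.min n k)).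
  assert (HW := wbound p lam Hp Hp1 Hlam G k k 1 (7 + 4 * x ^ 2 / lam)).
  assert (Hsum : sumr (fun i => G (S i) * (if Rle_dec lam (INR (S i)) then pi lam (S i) else 0)) k
                 <= 2 + 2 * x ^ 2 / lam).
  { eapply Rle_trans.
    apply (sumr_le _ (fun i => / lam * (INR (S i) * pi lam (S i)) + / lam * ilin lam i)).
    { intros i Hi. unfold G. replace (Nat.min (S i) k) with (S i) by lia.
      unfold ilin. destruct (Rle_dec lam (INR (S i))).
      - pose proof (termG1 lam Hlam i r).
        apply (Rmult_le_reg_l lam); auto. rewrite Rmult_plus_distr_l, <- !Rmult_assoc, Rinv_r by lra. lra.
      - rewrite Rmult_0_r, Rmult_0_r, Rplus_0_r. pose proof (pos_INR (S i)). pose proof (pi_pos lam (S i) Hlam).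
        pose proof (Rinv_0_lt_compat lam Hlam). apply Rmult_le_pos; [lra|]. nra. }
    rewrite sumr_plus, !sumr_scal. pose proof (M1 lam Hlam k). destruct (Lsum lam Hlam k) as [_ L2]. fold x in L2.
    pose proof (Rinv_0_lt_compat lam Hlam).
    replace (2 + 2 * x ^ 2 / lam) with (/ lam * lam + / lam * (2 * x ^ 2 + lam)) by (field; lra).
    apply Rplus_le_compat; apply Rmult_le_compat_l; lra. }
  assert (Htail : G k * (if Rle_dec lam (INR (S k)) then pois_tail lam (S k) else 0) <= 5 + 2 * x ^ 2 / lam).
  { assert (0 <= x ^ 2 / lam) by (apply Rdiv_le_0_compat; [nra|lra]).
    destruct (Rle_dec lam (INR (S k))); [|unfold G; rewrite Rmult_0_r; lra].
    pose proof (q_le1 lam Hlam (S k)). pose proof (q_pos lam Hlam (S k)).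
    unfold G. rewrite Nat.min_id. destruct k as [|w].
    { simpl. lra. }
    destruct (Rle_dec (INR (S w)) lam).
    - pose proof (g1_small lam Hlam (S w) r0). pose proof (g1_nonneg lam Hlam (S w)). pose proof (pos_INR (S w)).
      assert (INR (S w) * g1 lam (S w) <= 1).
      { eapply Rle_trans. apply Rmult_le_compat_l; [lra|exact H2]. apply (Rmult_le_reg_r lam); auto.
        replace (INR (S w) * (1 / lam) * lam) with (INR (S w)) by (field; lra). lra. }
      assert (0 <= INR (S w) * g1 lam (S w)) by nra. nra.
    - pose proof (tailB lam Hlam w ltac:(lra)).
      assert (0 < INR (S w)) by (apply lt_0_INR; lia).
      assert (INR (S w) * g1 lam (S w) * pois_tail lam (S (S w)) <= INR (S w) / lam + 2).
      { apply (Rmult_le_reg_l lam); auto.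
        replace (lam * (INR (S w) / lam + 2)) with (INR (S w) * (1 + 2 * lam / INR (S w))) by (field; lra).
        replace (lam * (INR (S w) * g1 lam (S w) * pois_tail lam (S (S w)))) with (INR (S w) * (lam * g1 lam (S w) * pois_tail lam (S (S w)))) by ring.
        apply Rmult_le_compat_l; lra. }
      assert (INR (S w) / lam <= 3 + 2 * x ^ 2 / lam).
      { pose proof (Lx lam Hlam (S w) ltac:(lra)). unfold x, px. rewrite Rmax_left by lra.
        apply (Rmult_le_reg_l lam); auto.
        replace (lam * (INR (S w) / lam)) with (INR (S w)) by (field; lra).
        replace (lam * (3 + 2 * (INR (S w) - lam) ^ 2 / lam)) with (3 * lam + 2 * (INR (S w) - lam) ^ 2) by (field; lra).
        lra. }
      lra. }
  assert (HE' := HW ltac:(lia)).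
  assert (E <= 1 + eta p lam k * (7 + 4 * x ^ 2 / lam)).
  { apply HE'; auto.
    - intros n. unfold G. apply Rmult_le_pos; [apply pos_INR|apply g1_nonneg; auto].
    - intros n. unfold G. apply Rmult_le_compat; [apply pos_INR|apply g1_nonneg; auto| |].
      apply le_INR; lia. apply g1_mono_le; auto; lia.
    - intros n Hn. unfold G. rewrite !Nat.min_r by lia. reflexivity.
    - intros n Hn Hnk. unfold G. rewrite Nat.min_l by lia.
      pose proof (g1_small lam Hlam n ltac:(lra)). pose proof (pos_INR n).
      eapply Rle_trans. apply Rmult_le_compat_l; [lra|exact H].
      apply (Rmult_le_reg_r lam); auto. replace (INR n * (1 / lam) * lam) with (INR n) by (field; lra). lra.
    - lra. }
  pose proof (eta_nonneg p lam k). assert (0 <= x ^ 2 / lam) by (apply Rdiv_le_0_compat; [nra|lra]).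
  fold x. nra.
Qed.

End St2.


Lemma half_case lam k : 0 < lam -> lam <= INR k -> 1/2 <= INR k - lam \/ 1/2 < lam.
Proof. intros Hl H. destruct k. simpl in H; lra. rewrite S_INR in *. pose proof (pos_INR k).
  destruct (Rle_dec (1/2) (INR k + 1 - lam)); [left|right]; lra. Qed.

Section St3.
Variable p : nat -> R.
Variable lam : R.
Hypothesis Hp : forall n, 0 <= p n.
Hypothesis Hp1 : infinite_sum p 1.
Hypothesis Hlam : 0 < lam.

Lemma Msq k : sumr (fun i => INR (S i) ^ 2 * pi lam (S i)) k <= lam * (lam + 1).
Proof. rewrite (sumr_ext _ (fun i => lam * (INR i * pi lam i) + lam * pi lam i)).
  rewrite sumr_plus, !sumr_scal. pose proof (M1' lam Hlam k). pose proof (sumr_pi_le1 lam Hlam k). nra.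
  intros i _. rewrite pi_S. assert (0 < INR (S i)) by (apply lt_0_INR; lia). rewrite S_INR in *. field; lra. Qed.

Lemma stmt3 k E : infinite_sum (fun n => p n * (INR (Nat.min n k) ^ 2 * g1 lam (Nat.min n k))) E ->
  E <= 18 * (eta p lam k + 1) * (lam + px lam k ^ 2 + px lam k ^ 3 / lam).
Proof.
  intros HE.
  set (G := fun n => INR (Nat.min n k) ^ 2 * g1 lam (Nat.min n k)).
  pose proof (eta_nonneg p lam k) as Heta.
  assert (Gnn : forall n, 0 <= G n).
  { intros n. unfold G. apply Rmult_le_pos; [apply pow2_ge_0|apply g1_nonneg; auto]. }
  assert (Gmon : forall n, G n <= G (S n)).
  { intros n. unfold G. apply Rmult_le_compat; [apply pow2_ge_0|apply g1_nonneg; auto| |].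
    pose proof (le_INR (Nat.min n k) (Nat.min (S n) k) ltac:(lia)). pose proof (pos_INR (Nat.min n k)). nra.
    apply g1_mono_le; auto; lia. }
  assert (GK : forall n, (k <= n)%nat -> G n = G k).
  { intros n Hn. unfold G. rewrite !Nat.min_r by lia. reflexivity. }
  assert (HM0 : forall n, INR n < lam -> (n <= k)%nat -> G n <= lam).
  { intros n Hn Hnk. unfold G. rewrite Nat.min_l by lia.
    pose proof (g1_small lam Hlam n ltac:(lra)). pose proof (pos_INR n).
    eapply Rle_trans. apply Rmult_le_compat_l; [apply pow2_ge_0|exact H].
    apply (Rmult_le_reg_r lam); auto. replace (INR n ^ 2 * (1 / lam) * lam) with (INR n ^ 2) by (field; lra). nra. }
  assert (Htail0 : forall w, k = S w -> G k * pois_tail lam (S k) <= lam + INR k ^ 2 / lam + 2 * INR k).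
  { intros w ->. unfold G. rewrite Nat.min_id.
    pose proof (q_le1 lam Hlam (S (S w))). pose proof (q_pos lam Hlam (S (S w))).
    assert (0 < INR (S w)) by (apply lt_0_INR; lia).
    assert (0 <= INR (S w) ^ 2 / lam) by (apply Rdiv_le_0_compat; [nra|lra]).
    pose proof (g1_nonneg lam Hlam (S w)).
    destruct (Rle_dec (INR (S w)) lam).
    - pose proof (g1_small lam Hlam (S w) r).
      assert (INR (S w) ^ 2 * g1 lam (S w) <= lam).
      { eapply Rle_trans. apply Rmult_le_compat_l; [apply pow2_ge_0|exact H4]. apply (Rmult_le_reg_r lam); auto.
        replace (INR (S w) ^ 2 * (1 / lam) * lam) with (INR (S w) ^ 2) by (field; lra). nra. }
      assert (0 <= INR (S w) ^ 2 * g1 lam (S w)) by nra. nra.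
    - pose proof (tailB lam Hlam w ltac:(lra)).
      apply (Rmult_le_reg_l lam); auto.
      replace (lam * (INR (S w) ^ 2 * g1 lam (S w) * pois_tail lam (S (S w)))) with (INR (S w) ^ 2 * (lam * g1 lam (S w) * pois_tail lam (S (S w)))) by ring.
      replace (lam * (lam + INR (S w) ^ 2 / lam + 2 * INR (S w))) with (lam * lam + INR (S w) ^ 2 * (1 + 2 * lam / INR (S w))) by (field; lra).
      assert (INR (S w) ^ 2 * (lam * g1 lam (S w) * pois_tail lam (S (S w))) <= INR (S w) ^ 2 * (1 + 2 * lam / INR (S w)))
        by (apply Rmult_le_compat_l; [apply pow2_ge_0|lra]). nra. }
  destruct (Rle_dec lam (INR k)) as [Hk|Hk].
  - set (x := INR k - lam). assert (Hpx : px lam k = x) by (unfold px, x; rewrite Rmax_left; lra).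
    rewrite Hpx. assert (Hx : 0 <= x) by (unfold x; lra).
    set (Pb := lam + 1 + (lam + x) * (2 * x ^ 2 + lam) / lam + (lam + INR k ^ 2 / lam + 2 * INR k)).
    assert (HW := wbound p lam Hp Hp1 Hlam G k k lam Pb (le_n k) Gnn Gmon GK HM0).
    assert (Hsum : sumr (fun i => G (S i) * (if Rle_dec lam (INR (S i)) then pi lam (S i) else 0)) k
                   <= lam + 1 + (lam + x) * (2 * x ^ 2 + lam) / lam).
    { eapply Rle_trans.
      apply (sumr_le _ (fun i => / lam * (INR (S i) ^ 2 * pi lam (S i)) + / lam * (lam + x) * ilin lam i)).
      { intros i Hi. unfold G. replace (Nat.min (S i) k) with (S i) by lia.
        pose proof (Rinv_0_lt_compat lam Hlam). pose proof (pi_pos lam (S i) Hlam).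
        unfold ilin. destruct (Rle_dec lam (INR (S i))).
        - pose proof (termG1 lam Hlam i r).
          assert (INR (S i) <= lam + x) by (unfold x; apply le_INR in Hi; lra).
          assert (0 < INR (S i)) by (apply lt_0_INR; lia).
          apply (Rmult_le_reg_l lam); auto.
          replace (lam * (/ lam * (INR (S i) ^ 2 * pi lam (S i)) + / lam * (lam + x) * (INR (S i) - lam)))
            with (INR (S i) ^ 2 * pi lam (S i) + (lam + x) * (INR (S i) - lam)) by (field; lra).
          replace (lam * (INR (S i) ^ 2 * g1 lam (S i) * pi lam (S i))) with (INR (S i) * (lam * (INR (S i) * g1 lam (S i)) * pi lam (S i))) by ring.
          assert (INR (S i) * (lam * (INR (S i) * g1 lam (S i)) * pi lam (S i)) <= INR (S i) * (INR (S i) * pi lam (S i) + (INR (S i) - lam)))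
            by (apply Rmult_le_compat_l; lra).
          nra.
        - rewrite Rmult_0_r, Rmult_0_r, Rplus_0_r. apply Rmult_le_pos; [lra|]. pose proof (pow2_ge_0 (INR (S i))). nra. }
      rewrite sumr_plus, sumr_scal, sumr_scal. pose proof (Msq k). destruct (Lsum lam Hlam k) as [_ L2].
      rewrite Hpx in L2. pose proof (Rinv_0_lt_compat lam Hlam).
      replace (lam + 1 + (lam + x) * (2 * x ^ 2 + lam) / lam) with (/ lam * (lam * (lam + 1)) + / lam * (lam + x) * (2 * x ^ 2 + lam)) by (field; lra).
      apply Rplus_le_compat. apply Rmult_le_compat_l; lra. apply Rmult_le_compat_l; [|lra]. apply Rmult_le_pos; lra. }
    assert (Htail : G k * (if Rle_dec lam (INR (S k)) then pois_tail lam (S k) else 0) <= lam + INR k ^ 2 / lam + 2 * INR k).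
    { destruct (Rle_dec lam (INR (S k))); [|exfalso; rewrite S_INR in n; lra].
      destruct k as [|w]. simpl in Hk; lra. apply (Htail0 w eq_refl). }
    assert (HE' : E <= lam + eta p lam k * Pb) by (apply HW; auto; unfold Pb; lra).
    assert (HPb : Pb <= 18 * (lam + x ^ 2 + x ^ 3 / lam)).
    { unfold Pb. apply (Rmult_le_reg_l lam); auto.
      replace (lam * (lam + 1 + (lam + x) * (2 * x ^ 2 + lam) / lam + (lam + INR k ^ 2 / lam + 2 * INR k)))
        with (lam * lam + lam + (lam + x) * (2 * x ^ 2 + lam) + lam * lam + INR k ^ 2 + 2 * lam * INR k) by (field; lra).
      replace (lam * (18 * (lam + x ^ 2 + x ^ 3 / lam))) with (18 * (lam * lam + lam * x ^ 2 + x ^ 3)) by (field; lra).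
      replace (INR k) with (lam + x) by (unfold x; ring).
      assert (Hx2 : 0 <= x ^ 2) by nra. assert (Hx3 : 0 <= x ^ 3) by (apply pow_le; lra).
      assert (Hlx2 : 0 <= lam * x ^ 2) by nra. assert (Hll : 0 <= lam * lam) by nra.
      assert (Eq : lam * lam + lam + (lam + x) * (2 * x ^ 2 + lam) + lam * lam + (lam + x) ^ 2 + 2 * lam * (lam + x) = 6*(lam*lam) + lam + 2*(lam*x^2) + 2*x^3 + 5*(lam*x) + x^2) by ring.
      rewrite Eq.
      destruct (half_case lam k Hlam Hk) as [Hc|Hc]; fold x in Hc.
      + assert (1 <= 4 * x ^ 2) by nra. assert (lam <= 4 * (lam * x ^ 2)) by nra. assert (lam * x <= 2 * (lam * x ^ 2)) by nra.
        assert (0 <= (2*x-1)*x^2) by (apply Rmult_le_pos; lra).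
        assert (x ^ 2 <= 2 * x ^ 3) by (replace (x^3) with (x*x^2) by ring; nra).
        lra.
      + assert (lam <= 2 * (lam * lam)) by nra. assert (x <= lam + x ^ 2) by nra.
        assert (lam * x <= lam * lam + lam * x ^ 2) by nra.
        assert (0 <= (2*lam-1)*x^2) by (apply Rmult_le_pos; lra).
        assert (x ^ 2 <= 2 * (lam * x ^ 2)) by nra.
        lra. }
    assert (Hl : lam <= lam + x ^ 2 + x ^ 3 / lam).
    { assert (0 <= x ^ 3 / lam) by (apply Rdiv_le_0_compat; [apply pow_le; lra|lra]). nra. }
    assert (eta p lam k * Pb <= eta p lam k * (18 * (lam + x ^ 2 + x ^ 3 / lam))) by (apply Rmult_le_compat_l; lra).
    nra.
  - assert (Hpx : px lam k = 0) by (unfold px; rewrite Rmax_right; lra).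
    rewrite Hpx. 
    assert (HW := wbound p lam Hp Hp1 Hlam G k k lam lam (le_n k) Gnn Gmon GK HM0).
    assert (Hsum : sumr (fun i => G (S i) * (if Rle_dec lam (INR (S i)) then pi lam (S i) else 0)) k <= 0).
    { assert (Z : forall m, sumr (fun _ => 0) m = 0) by (induction m; simpl; lra).
      apply (Rle_trans _ (sumr (fun _ => 0) k)); [|rewrite (Z k); lra].
      apply sumr_le. intros i Hi. destruct (Rle_dec lam (INR (S i))).
      exfalso. apply le_INR in Hi. lra. lra. }
    assert (Htail : G k * (if Rle_dec lam (INR (S k)) then pois_tail lam (S k) else 0) <= lam).
    { unfold G. rewrite Nat.min_id.
      assert (0 <= (if Rle_dec lam (INR (S k)) then pois_tail lam (S k) else 0) <= 1).
      { destruct Rle_dec; [|lra]. pose proof (q_le1 lam Hlam (S k)). pose proof (q_pos lam Hlam (S k)). lra. }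
      pose proof (g1_small lam Hlam k ltac:(lra)). pose proof (g1_nonneg lam Hlam k). pose proof (pos_INR k).
      assert (INR k ^ 2 * g1 lam k <= lam).
      { eapply Rle_trans. apply Rmult_le_compat_l; [apply pow2_ge_0|exact H0]. apply (Rmult_le_reg_r lam); auto.
        replace (INR k ^ 2 * (1 / lam) * lam) with (INR k ^ 2) by (field; lra). nra. }
      assert (0 <= INR k ^ 2 * g1 lam k) by nra. nra. }
    assert (HE' : E <= lam + eta p lam k * lam) by (apply HW; auto; lra).
    replace (0 ^ 2) with 0 by ring. replace (0 ^ 3 / lam) with 0 by (field; lra). nra.
Qed.

End St3.


Section St1.
Variable p : nat -> R.
Variable lam : R.
Hypothesis Hp : forall n, 0 <= p n.
Hypothesis Hp1 : infinite_sum p 1.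
Hypothesis Hlam : 0 < lam.

Lemma stmt1 k E : infinite_sum (fun n => p n * g1 lam (Nat.min (S n) k)) E ->
  E <= 5 * (eta p lam k + 1) * (1 / lam + Rmax (INR k + 1 - lam) 0 ^ 2 / lam ^ 2).
Proof.
  intros HE.
  set (y := Rmax (INR k + 1 - lam) 0). assert (Hy : 0 <= y) by apply Rmax_r.
  pose proof (eta_nonneg p lam k) as Heta.
  assert (HB : 0 <= 1 / lam + y ^ 2 / lam ^ 2).
  { assert (0 < lam ^ 2) by nra. apply Rplus_le_le_0_compat; apply Rdiv_le_0_compat; nra. }
  set (G := fun n => g1 lam (Nat.min (S n) k)).
  assert (Gnn : forall n, 0 <= G n) by (intros; apply g1_nonneg; auto).
  assert (Gmon : forall n, G n <= G (S n)) by (intros; apply g1_mono_le; auto; lia).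
  destruct k as [|k'].
  { assert (GK0 : forall n, (0 <= n)%nat -> G n = G 0%nat) by (intros; reflexivity).
    assert (HM00 : forall n, INR n < lam -> (n <= 0)%nat -> G n <= 0) by (intros; unfold G; simpl; lra).
    assert (HP0 : sumr (fun i => G (S i) * (if Rle_dec lam (INR (S i)) then pi lam (S i) else 0)) 0
      + G 0%nat * (if Rle_dec lam (INR 1) then pois_tail lam 1 else 0) <= 0)
      by (unfold G; simpl; lra).
    assert (E <= 0 + eta p lam 0 * 0) by exact (wbound p lam Hp Hp1 Hlam G 0 0 0 0 (le_n 0) Gnn Gmon GK0 HM00 HP0 E HE).
    nra. }
  set (M0 := 2 / lam + y ^ 2 / lam ^ 2).
  set (Pb := (2 * lam + 2 * y ^ 2) / lam ^ 2 + 3 / lam).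
  assert (GK : forall n, (k' <= n)%nat -> G n = G k').
  { intros n Hn. unfold G. rewrite !Nat.min_r by lia. reflexivity. }
  assert (HM0 : forall n, INR n < lam -> (n <= k')%nat -> G n <= M0).
  { intros n Hn Hnk. unfold G, M0. rewrite Nat.min_l by lia.
    assert (0 <= y ^ 2 / lam ^ 2) by (apply Rdiv_le_0_compat; nra).
    destruct (Rle_dec (INR (S n)) lam).
    - pose proof (g1_small lam Hlam (S n) r). assert (1/lam <= 2/lam) by (unfold Rdiv; pose proof (Rinv_0_lt_compat lam Hlam); nra). lra.
    - pose proof (g1_form lam Hlam n). pose proof (ff_small lam Hlam n ltac:(lra)). pose proof (ff_nonneg lam Hlam n).
      rewrite S_INR in *.
      assert (lam * g1 lam (S n) <= 2 + 1 / lam).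
      { rewrite H0. assert ((INR n + 1 - lam) * ff lam n <= ff lam n) by nra.
        assert (ff lam n <= 1 + 1 / lam).
        { eapply Rle_trans; [exact H1|]. apply (Rmult_le_reg_l lam); auto.
          replace (lam * ((INR n + 1) / lam)) with (INR n + 1) by (field; lra).
          replace (lam * (1 + 1 / lam)) with (lam + 1) by (field; lra). lra. }
        lra. }
      assert (1 <= y).
      { unfold y. rewrite Rmax_left. rewrite S_INR. apply le_INR in Hnk. lra. rewrite S_INR. apply le_INR in Hnk. lra. }
      assert (1 <= y ^ 2) by nra.
      apply (Rmult_le_reg_l lam); auto.
      replace (lam * (2 / lam + y ^ 2 / lam ^ 2)) with (2 + y ^ 2 / lam) by (field; lra).
      assert (1 / lam <= y ^ 2 / lam) by (unfold Rdiv; apply Rmult_le_compat_r; [left; apply Rinv_0_lt_compat|]; lra).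
      lra. }
  assert (HW := wbound p lam Hp Hp1 Hlam G k' (S k') M0 Pb ltac:(lia) Gnn Gmon GK HM0).
  assert (Hl2 : 0 < lam ^ 2) by nra.
  assert (Hsum : sumr (fun i => G (S i) * (if Rle_dec lam (INR (S i)) then pi lam (S i) else 0)) k'
                 <= (2 * lam + 2 * y ^ 2) / lam ^ 2).
  { eapply Rle_trans.
    apply (sumr_le _ (fun i => / lam ^ 2 * (INR (S (S i)) * pi lam (S (S i))) + / lam ^ 2 * ilin lam (S i))).
    { intros i Hi. unfold G. replace (Nat.min (S (S i)) (S k')) with (S (S i)) by lia.
      pose proof (Rinv_0_lt_compat _ Hl2). pose proof (pi_pos lam (S (S i)) Hlam).
      pose proof (pos_INR (S (S i))). pose proof (ilin_nonneg lam (S i)).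
      destruct (Rle_dec lam (INR (S i))).
      - assert (Hr2 : lam <= INR (S (S i))) by (rewrite (S_INR (S i)); lra).
        pose proof (termG lam Hlam (S i) Hr2).
        assert (0 < INR (S (S i))) by (apply lt_0_INR; lia).
        assert (Hpi : pi lam (S i) = pi lam (S (S i)) * INR (S (S i)) / lam) by (rewrite (pi_S lam (S i)); field; split; lra).
        assert (Hil : ilin lam (S i) = INR (S (S i)) - lam). { unfold ilin. destruct (Rle_dec lam (INR (S (S i)))) as [_|Hn]; [reflexivity| exfalso; apply Hn; exact Hr2]. }
        rewrite Hil, Hpi.
        apply (Rmult_le_reg_l (lam ^ 2)); auto.
        replace (lam ^ 2 * (/ lam ^ 2 * (INR (S (S i)) * pi lam (S (S i))) + / lam ^ 2 * (INR (S (S i)) - lam)))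
          with (INR (S (S i)) * pi lam (S (S i)) + (INR (S (S i)) - lam)) by (field; lra).
        replace (lam ^ 2 * (g1 lam (S (S i)) * (pi lam (S (S i)) * INR (S (S i)) / lam)))
          with (INR (S (S i)) * (lam * g1 lam (S (S i)) * pi lam (S (S i)))) by (field; lra).
        replace (INR (S (S i)) * pi lam (S (S i)) + (INR (S (S i)) - lam))
          with (INR (S (S i)) * (pi lam (S (S i)) + (INR (S (S i)) - lam) / INR (S (S i)))) by (field; lra).
        apply Rmult_le_compat_l; lra.
      - rewrite Rmult_0_r. apply Rplus_le_le_0_compat; apply Rmult_le_pos; nra. }
    rewrite sumr_plus, !sumr_scal.
    assert (S1 : sumr (fun i => INR (S (S i)) * pi lam (S (S i))) k' <= lam).
    { pose proof (M1 lam Hlam (S k')). rewrite sumr_shift in H.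
      pose proof (pi_pos lam 1 Hlam). pose proof (pos_INR 1). nra. }
    assert (S2 : sumr (fun i => ilin lam (S i)) k' <= 2 * y ^ 2 + lam).
    { destruct (Lsum lam Hlam (S k')) as [_ L2]. rewrite sumr_shift in L2.
      pose proof (ilin_nonneg lam 0).
      assert (px lam (S k') <= y) by (unfold px, y; apply Rmax_lub; [eapply Rle_trans; [|apply Rmax_l]; lra| apply Rmax_r]).
      pose proof (px_nonneg lam (S k')).
      assert (px lam (S k') ^ 2 <= y ^ 2) by nra. lra. }
    pose proof (Rinv_0_lt_compat _ Hl2).
    replace ((2 * lam + 2 * y ^ 2) / lam ^ 2) with (/ lam ^ 2 * lam + / lam ^ 2 * (2 * y ^ 2 + lam)) by (field; lra).
    apply Rplus_le_compat; apply Rmult_le_compat_l; lra. }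
  assert (Htail : G k' * (if Rle_dec lam (INR (S k')) then pois_tail lam (S k') else 0) <= 3 / lam).
  { assert (0 <= 3 / lam) by (apply Rdiv_le_0_compat; lra).
    destruct (Rle_dec lam (INR (S k'))); [|rewrite Rmult_0_r; lra].
    unfold G. replace (Nat.min (S k') (S k')) with (S k') by lia.
    pose proof (tailA lam Hlam k' r). apply (Rmult_le_reg_l lam); auto.
    replace (lam * (3 / lam)) with 3 by (field; lra). rewrite <- Rmult_assoc. lra. }
  assert (HE' : E <= M0 + eta p lam (S k') * Pb) by (apply HW; auto; unfold Pb; lra).
  fold y.
  assert (M0 <= 5 * (1 / lam + y ^ 2 / lam ^ 2)).
  { unfold M0. assert (0 <= y ^ 2 / lam ^ 2) by (apply Rdiv_le_0_compat; nra).
    assert (0 <= 1 / lam) by (apply Rdiv_le_0_compat; lra).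
    replace (2 / lam) with (2 * (1 / lam)) by (field; lra). lra. }
  assert (Pb <= 5 * (1 / lam + y ^ 2 / lam ^ 2)).
  { unfold Pb. assert (0 <= y ^ 2 / lam ^ 2) by (apply Rdiv_le_0_compat; nra).
    replace ((2 * lam + 2 * y ^ 2) / lam ^ 2 + 3 / lam) with (5 * (1 / lam) + 2 * (y ^ 2 / lam ^ 2)) by (field; lra).
    lra. }
  assert (eta p lam (S k') * Pb <= eta p lam (S k') * (5 * (1 / lam + y ^ 2 / lam ^ 2))) by (apply Rmult_le_compat_l; lra).
  nra.
Qed.

End St1.


Theorem lemma4p5 :
  exists C : R,
  forall (p : nat -> R) (lam : R),
    (forall n, 0 <= p n) ->
    infinite_sum p 1 ->
    infinite_sum (fun n => INR n * p n) lam ->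
    0 < lam ->
    forall k : nat,
      (forall E, infinite_sum (fun n => p n * g1 lam (Nat.min (S n) k)) E ->
         E <= C * (eta p lam k + 1)
                * (1 / lam + (pospart (INR k + 1 - lam)) ^ 2 / lam ^ 2)) /\
      (forall E, infinite_sum
                   (fun n => p n * (INR (Nat.min n k) * g1 lam (Nat.min n k))) E ->
         E <= C * (eta p lam k + 1)
                * (1 + (pospart (INR k - lam)) ^ 2 / lam)) /\
      (forall E, infinite_sum
                   (fun n => p n * (INR (Nat.min n k) ^ 2 * g1 lam (Nat.min n k))) E ->
         E <= C * (eta p lam k + 1)
                * (lam + (pospart (INR k - lam)) ^ 2 + (pospart (INR k - lam)) ^ 3 / lam)).
Proof.
  exists 100. intros p lam Hp Hp1 _ Hlam k.
  pose proof (eta_nonneg p lam k) as Heta.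
  assert (Hl2 : 0 < lam ^ 2) by nra.
  unfold pospart.
  split; [|split].
  - intros E HE. pose proof (stmt1 p lam Hp Hp1 Hlam k E HE).
    set (y := Rmax (INR k + 1 - lam) 0) in *.
    assert (0 <= 1 / lam + y ^ 2 / lam ^ 2).
    { apply Rplus_le_le_0_compat; apply Rdiv_le_0_compat; nra. }
    assert (0 <= (eta p lam k + 1) * (1 / lam + y ^ 2 / lam ^ 2)) by nra. nra.
  - intros E HE. pose proof (stmt2 p lam Hp Hp1 Hlam k E HE). unfold px in H.
    set (y := Rmax (INR k - lam) 0) in *.
    assert (0 <= 1 + y ^ 2 / lam).
    { assert (0 <= y ^ 2 / lam) by (apply Rdiv_le_0_compat; nra). lra. }
    assert (0 <= (eta p lam k + 1) * (1 + y ^ 2 / lam)) by nra. nra.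
  - intros E HE. pose proof (stmt3 p lam Hp Hp1 Hlam k E HE). unfold px in H.
    set (y := Rmax (INR k - lam) 0) in *. assert (0 <= y) by apply Rmax_r.
    assert (0 <= lam + y ^ 2 + y ^ 3 / lam).
    { assert (0 <= y ^ 3 / lam) by (apply Rdiv_le_0_compat; [apply pow_le|]; lra). nra. }
    assert (0 <= (eta p lam k + 1) * (lam + y ^ 2 + y ^ 3 / lam)) by nra. nra.
Qed.
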